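(* Let $C\subseteq V(K_n\times K_m)$ satisfy: (1) there exist $1\le n_1<n_2<n_3\le n$ and $1\le m_1<m_2<m_3\le m$ with $(n_1,m_1),(n_2,m_2),(n_3,m_3)\in C$; (2) every $v\in C$ is row-isolated or column-isolated in $C$; (3) $rs(C)=m$ and $cs(C)=n$; (4) at most one vertex of $C$ is isolated in $C$. Then $C$ is an identifying code of $K_n\times K_m$.
   Context: $K_n\times K_m$ is the direct product of complete graphs: vertex set $[n]\times[m]$, with $(i,r)$ adjacent to $(j,s)$ iff $i\ne j$ and $r \ne s$. An identifying code is a dominating set $C$ with $N[x]\cap C\ne N[y]\cap C$ for all distinct vertices $x,y$ ($N[x]$ the closed neighborhood). Columns: $C_i=\{(i,t):t\in[m]\}$; rows: $R_r=\{(k,r):k\in[n]\}$. $cs(C)$ (resp. $rs(C)$) is the number of columns (resp. rows) meeting $C$. A vertex $v=(i,r)$ is column-isolated in $C$ if $C\cap C_i=\{v\}$, row-isolated in $C$ if $C\cap R_r=\{v\}$, and isolated in $C$ if both. *)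

(* Defs.v *)
(* Vertices of K_n x K_m are pairs ('I_n * 'I_m) (0-based). *)
From mathcomp Require Import all_boot.
Set Implicit Arguments. Unset Strict Implicit. Unset Printing Implicit Defensive.

Section Defs.
Variables n m : nat.
Definition vert := ('I_n * 'I_m)%type.

Definition adj (x y : vert) : bool := (x.1 != y.1) && (x.2 != y.2).

Definition cnbhd (x : vert) : {set vert} := [set y | (y == x) || adj x y].

Definition dominating (C : {set vert}) : Prop :=
  forall x : vert, cnbhd x :&: C != set0.

Definition identifying_code (C : {set vert}) : Prop :=
  dominating C /\
  forall x y : vert, x != y -> cnbhd x :&: C != cnbhd y :&: C.

Definition column (i : 'I_n) : {set vert} := [set v : vert | v.1 == i].
Definition row (r : 'I_m) : {set vert} := [set v : vert | v.2 == r].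

Definition cs (C : {set vert}) : nat := #|[set i : 'I_n | column i :&: C != set0]|.
Definition rs (C : {set vert}) : nat := #|[set r : 'I_m | row r :&: C != set0]|.

Definition col_isolated (C : {set vert}) (v : vert) : bool :=
  column v.1 :&: C == [set v].
Definition row_isolated (C : {set vert}) (v : vert) : bool :=
  row v.2 :&: C == [set v].
Definition isolated (C : {set vert}) (v : vert) : bool :=
  col_isolated C v && row_isolated C v.
End Defs.

(* Main.v *)
Require Import Defs.
From mathcomp Require Import all_boot.
From mathcomp Require Import zify.

Set Implicit Arguments. Unset Strict Implicit. Unset Printing Implicit Defensive.

Lemma colne n m (C : {set vert n m}) : cs C = n ->
  forall i : 'I_n, exists2 z, z \in C & z.1 = i.
Proof.
move=> H i.
have E : [set i0 : 'I_n | column m i0 :&: C != set0] = setT.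
  by apply/eqP; rewrite eqEcard subsetT cardsT card_ord; rewrite /cs in H; rewrite H leqnn.
have : i \in [set i0 : 'I_n | column m i0 :&: C != set0] by rewrite E inE.
rewrite inE => /set0Pn [z]; rewrite !inE => /andP [/eqP e zC].
by exists z.
Qed.

Lemma rowne n m (C : {set vert n m}) : rs C = m ->
  forall r : 'I_m, exists2 z, z \in C & z.2 = r.
Proof.
move=> H r.
have E : [set r0 : 'I_m | row n r0 :&: C != set0] = setT.
  by apply/eqP; rewrite eqEcard subsetT cardsT card_ord; rewrite /rs in H; rewrite H leqnn.
have : r \in [set r0 : 'I_m | row n r0 :&: C != set0] by rewrite E inE.
rewrite inE => /set0Pn [z]; rewrite !inE => /andP [/eqP e zC].
by exists z.
Qed.

Lemma key n m (C : {set vert n m}) (i j : 'I_n) (r s : 'I_m) :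
  i != j -> r != s ->
  (forall v, v \in C -> row_isolated C v || col_isolated C v) ->
  cs C = n -> rs C = m ->
  (forall z, z \in C -> z.1 = i -> z = (i, r) \/ z = (i, s)) ->
  (forall z, z \in C -> z.1 = j -> z = (j, r) \/ z = (j, s)) ->
  (forall z, z \in C -> z.2 = r -> z = (i, r) \/ z = (j, r)) ->
  (forall z, z \in C -> z.2 = s -> z = (i, s) \/ z = (j, s)) ->
  (i, r) \in C -> isolated C (i, r) /\ isolated C (j, s) /\ (j, s) \in C.
Proof.
move=> ij rs Hiso Hcs Hrs H1 H2 H3 H4 xC.
have pC : (i, s) \notin C.
  apply/negP => pC.
  have xnc : ~~ col_isolated C (i, r).
    apply/negP => /eqP e.
    have : (i, s) \in column m (i, r).1 :&: C by rewrite !inE eqxx pC.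
    rewrite e inE => /eqP [] /eqP; by rewrite eq_sym (negbTE rs).
  have xr : row_isolated C (i, r) by move: (Hiso _ xC); rewrite (negbTE xnc) orbF.
  have pnc : ~~ col_isolated C (i, s).
    apply/negP => /eqP e.
    have : (i, r) \in column m (i, s).1 :&: C by rewrite !inE eqxx xC.
    rewrite e inE => /eqP [] /eqP; by rewrite (negbTE rs).
  have pr : row_isolated C (i, s) by move: (Hiso _ pC); rewrite (negbTE pnc) orbF.
  case: (colne Hcs j) => z zC zj.
  case: (H2 z zC zj) => ez; subst z.
  - move/eqP: xr => e.
    have : (j, r) \in row n (i, r).2 :&: C by rewrite !inE eqxx zC.
    rewrite e inE => /eqP [] /eqP; by rewrite eq_sym (negbTE ij).
  - move/eqP: pr => e.
    have : (j, s) \in row n (i, s).2 :&: C by rewrite !inE eqxx zC.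
    rewrite e inE => /eqP [] /eqP; by rewrite eq_sym (negbTE ij).
have qC : (j, r) \notin C.
  apply/negP => qC.
  have xnr : ~~ row_isolated C (i, r).
    apply/negP => /eqP e.
    have : (j, r) \in row n (i, r).2 :&: C by rewrite !inE eqxx qC.
    rewrite e inE => /eqP [] /eqP; by rewrite eq_sym (negbTE ij).
  have xc : col_isolated C (i, r) by move: (Hiso _ xC); rewrite (negbTE xnr).
  have qnr : ~~ row_isolated C (j, r).
    apply/negP => /eqP e.
    have : (i, r) \in row n (j, r).2 :&: C by rewrite !inE eqxx xC.
    rewrite e inE => /eqP [] /eqP; by rewrite (negbTE ij).
  have qc : col_isolated C (j, r) by move: (Hiso _ qC); rewrite (negbTE qnr).
  case: (rowne Hrs s) => z zC zs.
  case: (H4 z zC zs) => ez; subst z.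
  - move/eqP: xc => e.
    have : (i, s) \in column m (i, r).1 :&: C by rewrite !inE eqxx zC.
    rewrite e inE => /eqP [] /eqP; by rewrite eq_sym (negbTE rs).
  - move/eqP: qc => e.
    have : (j, s) \in column m (j, r).1 :&: C by rewrite !inE eqxx zC.
    rewrite e inE => /eqP [] /eqP; by rewrite eq_sym (negbTE rs).
have yC : (j, s) \in C.
  case: (colne Hcs j) => z zC zj.
  case: (H2 z zC zj) => ez; subst z => //.
  by rewrite zC in qC.
split; last split => //.
- rewrite /isolated /col_isolated /row_isolated; apply/andP; split; apply/eqP/setP => z;
  rewrite !inE /=; apply/andP/idP.
  + case=> /eqP zi zC; case: (H1 z zC zi) => ez; subst z; rewrite ?eqxx //.
    by rewrite zC in pC.
  + by move/eqP->; rewrite eqxx xC.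
  + case=> /eqP zi zC; case: (H3 z zC zi) => ez; subst z; rewrite ?eqxx //.
    by rewrite zC in qC.
  + by move/eqP->; rewrite eqxx xC.
- rewrite /isolated /col_isolated /row_isolated; apply/andP; split; apply/eqP/setP => z;
  rewrite !inE /=; apply/andP/idP.
  + case=> /eqP zi zC; case: (H2 z zC zi) => ez; subst z; rewrite ?eqxx //.
    by rewrite zC in qC.
  + by move/eqP->; rewrite eqxx yC.
  + case=> /eqP zi zC; case: (H4 z zC zi) => ez; subst z; rewrite ?eqxx //.
    by rewrite zC in pC.
  + by move/eqP->; rewrite eqxx yC.
Qed.

Theorem mainTheorem12 (n m : nat) (C : {set vert n m}) :
  (exists (n1 n2 n3 : 'I_n) (m1 m2 m3 : 'I_m),
      [/\ (n1 < n2)%N, (n2 < n3)%N, (m1 < m2)%N, (m2 < m3)%N &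
          [/\ (n1, m1) \in C, (n2, m2) \in C & (n3, m3) \in C]]) ->
  (forall v, v \in C -> row_isolated C v || col_isolated C v) ->
  rs C = m -> cs C = n ->
  #|[set v in C | isolated C v]| <= 1 ->
  identifying_code C.
Proof.
move=> [n1 [n2 [n3 [m1 [m2 [m3 [h12 h23 k12 k23 [aC bC cC]]]]]]]] Hiso Hrs Hcs Hcard.
split.
  case=> i r.
  apply/set0Pn.
  have tryw : forall w, w \in C -> adj (i, r) w -> exists x, x \in cnbhd (i, r) :&: C.
    by move=> w wC aw; exists w; rewrite /cnbhd !inE aw orbT wC.
  rewrite /adj /= in tryw.
  case: (boolP ((i != n1) && (r != m1))) => [/(tryw _ aC)//|/nandP h1].
  case: (boolP ((i != n2) && (r != m2))) => [/(tryw _ bC)//|/nandP h2].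
  case: (boolP ((i != n3) && (r != m3))) => [/(tryw _ cC)//|/nandP h3].
  exfalso; rewrite !negbK in h1 h2 h3.
  move: h1 h2 h3; rewrite -!val_eqE /=.
  case/orP=> /eqP e1; case/orP=> /eqP e2; case/orP=> /eqP e3; lia.
case=> i r [j s] ne; apply/eqP => E.
have P z : z \in C -> ((z == (i, r)) || adj (i, r) z) = ((z == (j, s)) || adj (j, s) z).
  move=> zC; move: (congr1 (fun S : {set vert n m} => z \in S) E) => /=.
  by rewrite /cnbhd !inE zC !andbT.
case: (eqVneq i j) => [eij | nij].
  subst j.
  have nrs : r != s by apply: contraNneq ne => ->.
  case: (rowne Hrs r) => [[a b]] zC /= eb; subst b.
  move: (P _ zC); rewrite /adj /= !xpair_eqE eqxx (eq_sym s r) (negbTE nrs) /= ?andbT ?andbF ?orbF.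
  by rewrite eq_sym; case: (i == a).
case: (eqVneq r s) => [ers | nrs].
  subst s.
  case: (colne Hcs i) => [[a b]] zC /= ea; subst a.
  move: (P _ zC); rewrite /adj /= !xpair_eqE eqxx (eq_sym j i) (negbTE nij) /= ?andbT ?andbF ?orbF.
  by rewrite eq_sym; case: (r == b).
have sr : (s == r) = false by rewrite eq_sym (negbTE nrs).
have ji : (j == i) = false by rewrite eq_sym (negbTE nij).
have H1 : forall z, z \in C -> z.1 = i -> z = (i, r) \/ z = (i, s).
  move=> [a b] zC /= ea; subst a.
  move: (P _ zC); rewrite /adj /= !xpair_eqE eqxx (negbTE nij) ji /= ?andbT ?andbF ?orbF.
  case: (eqVneq b r) => [->|br]; first by left.
  by move/esym/negbFE/eqP <-; right.
have H2 : forall z, z \in C -> z.1 = j -> z = (j, r) \/ z = (j, s).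
  move=> [a b] zC /= ea; subst a.
  move: (P _ zC); rewrite /adj /= !xpair_eqE eqxx (negbTE nij) ji /= ?andbT ?andbF ?orbF.
  case: (eqVneq b r) => [->|br]; first by left.
  by move=> /esym/eqP ->; right.
have H3 : forall z, z \in C -> z.2 = r -> z = (i, r) \/ z = (j, r).
  move=> [a b] zC /= ea; subst b.
  move: (P _ zC); rewrite /adj /= !xpair_eqE eqxx (negbTE nrs) sr /= ?andbT ?andbF ?orbF.
  case: (eqVneq a i) => [->|ai]; first by left.
  by move/esym/negbFE/eqP <-; right.
have H4 : forall z, z \in C -> z.2 = s -> z = (i, s) \/ z = (j, s).
  move=> [a b] zC /= ea; subst b.
  move: (P _ zC); rewrite /adj /= !xpair_eqE eqxx (negbTE nrs) sr /= ?andbT ?andbF ?orbF.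
  case: (eqVneq a i) => [->|ai]; first by left.
  by move=> /esym/eqP ->; right.
have two : forall u v, u != v -> u \in C -> v \in C -> isolated C u -> isolated C v -> False.
  move=> u v uv uC vC ui vi.
  have : [set u; v] \subset [set v in C | isolated C v].
    by apply/subsetP => w; rewrite !inE => /orP [] /eqP ->; rewrite ?uC ?ui ?vC ?vi.
  move/subset_leq_card; rewrite cards2 uv => h.
  by move: (leq_trans h Hcard).
case: (colne Hcs i) => z zC zi.
case: (H1 z zC zi) => ez; subst z.
  have [xi [yi yC]] := key nij nrs Hiso Hcs Hrs H1 H2 H3 H4 zC.
  apply: (two _ _ ne zC yC xi yi).
have [xi [yi yC]] := key nij (negbT sr) Hiso Hcs Hrs
   (fun z a b => proj1 (or_comm _ _) (H1 z a b)) (fun z a b => proj1 (or_comm _ _) (H2 z a b)) H4 H3 zC.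
apply: (two (i, s) (j, r) _ zC yC xi yi).
by rewrite xpair_eqE (negbTE nij).
Qed.
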